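(* Let $R$ be a commutative ring with unit, let $Q$ be a labelled quiver with labels $X$ and let $F\subseteq R\langle X\rangle_Q$. If $G\subseteq R\langle X\rangle_Q$ is a set of $Q$-consequences of $F$, then any $Q$-consequence of $G$ is also a $Q$-consequence of $F$.
   Context: $R\langle X\rangle$ is the free algebra of noncommutative polynomials over $R$ in indeterminates $X$, with monomials the words in $\langle X\rangle$ (including the empty word $1$); $\operatorname{supp}(f)$ is the set of monomials with nonzero coefficient. A labelled quiver $Q=(V,E,X,s,t,l)$ has vertices $V$, edges $E$, source/target maps $s,t:E\to V$ and labelling $l:E\to X$. A nonempty path $p=e_n\cdots e_1$ (with $s(e_{i+1})=t(e_i)$) has label $l(e_n)\cdots l(e_1)$, source $s(e_1)$, target $t(e_n)$; each vertex $v$ has an empty path with label $1$ and source and target $v$. For a monomial $m$, $\sigma(m)=\{(s(p),t(p)) : p \text{ a path with } l(p)=m\}$; for a polynomial $f$, $\sigma(f)=\bigcap_{m\in\operatorname{supp}(f)}\sigma(m)$ (so $\sigma(0)=V\times V$). $f$ is compatible with $Q$ if $\sigma(f)\neq\emptyset$, and uniformly compatible if it is compatible and all $m\in\operatorname{supp}(f)$ have the same set $\sigma(m)$; $R\langle X\rangle_Q$ is the set of uniformly compatible polynomials. For $F\subseteq R\langle X\rangle_Q$, a polynomial $f$ is a $Q$-consequence of $F$ if $f$ is compatible with $Q$ and there are finitely many $a_i,b_i\in R\langle X\rangle_Q$ and $f_i\in F$ with $f=\sum_i a_if_ib_i$ and $\sigma(a_if_ib_i)\supseteq\sigma(f)$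 for every $i$ (the empty sum is allowed). *)

(* Defs.v *)
(* Noncommutative polynomials R<X> over a commutative ring R
   are represented as coefficient functions  seq X -> R  (a word is a seq,
   head = leftmost letter, [::] = empty word 1) with finite support. *)
From HB Require Import structures.
From mathcomp Require Import all_boot all_order all_algebra.
From Stdlib Require List.
Set Implicit Arguments. Unset Strict Implicit. Unset Printing Implicit Defensive.
Import GRing.Theory.
Local Open Scope ring_scope.

Section NC.
Variable R : comPzRingType.
Variable X : Type.

Definition ncpoly := seq X -> R.

Definition is_poly (f : ncpoly) : Prop :=
  exists L : seq (seq X), forall m, f m != 0 -> List.In m L.

Definition ncadd (f g : ncpoly) : ncpoly := fun m => f m + g m.

Definition ncmul (f g : ncpoly) : ncpoly :=
  fun m => \sum_(i < (size m).+1) f (take i m) * g (drop i m).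

Record quiver := Quiver {
  qV : Type; qE : Type;
  qs : qE -> qV; qt : qE -> qV; ql : qE -> X }.

(* reach Q m u w : there is a path p with label m, s(p) = u, t(p) = w.
   For m = x :: m', the last edge e_n has label x, target w, and the rest
   is a path with label m' from u to s(e_n). *)
Fixpoint reach (Q : quiver) (m : seq X) (u w : qV Q) : Prop :=
  match m with
  | [::] => u = w
  | x :: m' => exists e : qE Q, ql e = x /\ qt e = w /\ reach m' u (qs e)
  end.

Definition sigma_m (Q : quiver) (m : seq X) : qV Q * qV Q -> Prop :=
  fun p => reach m p.1 p.2.

Arguments sigma_m : clear implicits.

Definition sigma (Q : quiver) (f : ncpoly) : qV Q * qV Q -> Prop :=
  fun p => forall m, f m != 0 -> sigma_m Q m p.

Arguments sigma : clear implicits.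

Definition compatible (Q : quiver) (f : ncpoly) : Prop :=
  exists p, sigma Q f p.

Definition unif_compatible (Q : quiver) (f : ncpoly) : Prop :=
  compatible Q f /\
  forall m m', f m != 0 -> f m' != 0 -> forall p, sigma_m Q m p <-> sigma_m Q m' p.

Definition in_RXQ (Q : quiver) (f : ncpoly) : Prop :=
  is_poly f /\ unif_compatible Q f.

Definition Qconsequence (Q : quiver) (F : ncpoly -> Prop) (f : ncpoly) : Prop :=
  is_poly f /\ compatible Q f /\
  exists L : seq (ncpoly * ncpoly * ncpoly),
    (forall tr, List.In tr L ->
       in_RXQ Q tr.1.1 /\ F tr.1.2 /\ in_RXQ Q tr.2 /\
       (forall p, sigma Q f p -> sigma Q (ncmul (ncmul tr.1.1 tr.1.2) tr.2) p)) /\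
    (forall m, f m = \sum_(tr <- L) ncmul (ncmul tr.1.1 tr.1.2) tr.2 m).

End NC.

Arguments reach {X} Q m u w.
Arguments sigma_m {X} Q m p.
Arguments sigma {R X} Q f p.
Arguments compatible {R X} Q f.
Arguments unif_compatible {R X} Q f.
Arguments in_RXQ {R X} Q f.
Arguments Qconsequence {R X} Q F f.

(* Main.v *)
Require Import Defs.
From mathcomp Require Import all_boot all_order all_algebra.
From Stdlib Require Import Classical_Prop.
Import GRing.Theory.
Local Open Scope ring_scope.
Set Implicit Arguments. Unset Strict Implicit.
Section S.
Variable R : comPzRingType.
Variable X : Type.
Implicit Types f g h : ncpoly R X.

Lemma ncmulA f g h m : ncmul (ncmul f g) h m = ncmul f (ncmul g h) m.
Proof.
rewrite /ncmul.
set n := size m.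
pose F (j i : nat) := f (take j m) * g (take (i - j) (drop j m)) * h (drop i m).
transitivity (\sum_(i < n.+1) \sum_(j < n.+1) (if (j <= i)%N then F j i else 0)).
  apply: eq_bigr => i _.
  have hi : (i <= n)%N by rewrite -ltnS.
  rewrite big_distrl /= size_takel //.
  rewrite (big_ord_widen n.+1 (fun j : nat => f (take j (take i m)) * g (drop j (take i m)) * h (drop i m))) //.
  rewrite big_mkcond; apply: eq_bigr => j _.
  rewrite ltnS; case: ifP => // hj.
  by rewrite /F take_takel // take_drop subnK.
rewrite exchange_big; apply: eq_bigr => j _.
have hj : (j <= n)%N by rewrite -ltnS.
rewrite big_distrr /= size_drop -/n -big_mkcond /=.
transitivity (\sum_(j <= i < n.+1) F j i); first by rewrite big_geq_mkord.
rewrite -{1}(add0n j) big_addn big_mkord subSn //.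
apply: eq_bigr => k _.
by rewrite /F addnK drop_drop mulrA.
Qed.

Lemma ncmul_ext f f' g g' m : (forall m, f m = f' m) -> (forall m, g m = g' m) ->
  ncmul f g m = ncmul f' g' m.
Proof. by move=> Hf Hg; rewrite /ncmul; apply: eq_bigr => i _; rewrite Hf Hg. Qed.

Lemma ncmul_sumr (T : Type) (s : seq T) (F : T -> ncpoly R X) a m :
  ncmul a (fun w => \sum_(x <- s) F x w) m = \sum_(x <- s) ncmul a (F x) m.
Proof.
rewrite /ncmul; under eq_bigr do rewrite big_distrr.
by rewrite exchange_big.
Qed.

Lemma ncmul_suml (T : Type) (s : seq T) (F : T -> ncpoly R X) a m :
  ncmul (fun w => \sum_(x <- s) F x w) a m = \sum_(x <- s) ncmul (F x) a m.
Proof.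
rewrite /ncmul; under eq_bigr do rewrite big_distrl.
by rewrite exchange_big.
Qed.

Lemma ncmul_nz f g m : ncmul f g m != 0 ->
  exists i, f (take i m) != 0 /\ g (drop i m) != 0.
Proof.
case: (boolP [exists i : 'I_(size m).+1, (f (take i m) != 0) && (g (drop i m) != 0)]).
  by case/existsP => i /andP [h1 h2]; exists i.
move=> /existsPn H; rewrite /ncmul big1 ?eqxx // => i _.
move: (H i); rewrite negb_and !negbK; case/orP => /eqP ->; by rewrite ?mul0r ?mulr0.
Qed.

Lemma ncmul_nzl f g m : ncmul f g m != 0 -> exists m', f m' != 0.
Proof. by case/ncmul_nz => i [h _]; exists (take i m). Qed.
Lemma ncmul_nzr f g m : ncmul f g m != 0 -> exists m', g m' != 0.
Proof. by case/ncmul_nz => i [_ h]; exists (drop i m). Qed.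

Lemma is_poly_mul f g : is_poly f -> is_poly g -> is_poly (ncmul f g).
Proof.
move=> [Lf Hf] [Lg Hg].
exists (List.flat_map (fun u => List.map (fun v => u ++ v) Lg) Lf) => m /ncmul_nz [i [h1 h2]].
apply/List.in_flat_map; exists (take i m); split; first exact: Hf.
apply/List.in_map_iff; exists (drop i m); split; last exact: Hg.
exact: cat_take_drop.
Qed.

Variable Q : quiver X.

Lemma reach_cat (u v : seq X) (s t : qV Q) :
  reach Q (u ++ v) s t <-> exists k, reach Q v s k /\ reach Q u k t.
Proof.
elim: u t => [|x u IH] t /=.
  split; [by move=> H; exists t | by case=> k [H E]; rewrite -E].
split.
  case=> e [he [ht hr]]; case/IH: hr => k [h1 h2]; exists k; split => //.
  by exists e.
case=> k [h1 [e [he [ht hr]]]]; exists e; do 2 split => //.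
by apply/IH; exists k.
Qed.

Definition W f := forall m m', f m != 0 -> f m' != 0 ->
  forall p, sigma_m Q m p <-> sigma_m Q m' p.

Lemma W_mul f g : W f -> W g -> W (ncmul f g).
Proof.
move=> Wf Wg m m' /ncmul_nz [i [h1 h2]] /ncmul_nz [i' [h1' h2']] [s t].
rewrite /sigma_m /= -{1}(cat_take_drop i m) -{1}(cat_take_drop i' m') !reach_cat.
split; case=> k [a b]; exists k; split.
- by apply/(Wg _ _ h2 h2' (s, k)).
- by apply/(Wf _ _ h1 h1' (k, t)).
- by apply/(Wg _ _ h2' h2 (s, k)).
- by apply/(Wf _ _ h1' h1 (k, t)).
Qed.

Lemma L1 f g s k t : sigma Q g (s, k) -> sigma Q f (k, t) -> sigma Q (ncmul f g) (s, t).
Proof.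
move=> Hg Hf m /ncmul_nz [i [h1 h2]].
rewrite /sigma_m /= -(cat_take_drop i m) reach_cat.
by exists k; split; [apply: (Hg _ h2) | apply: (Hf _ h1)].
Qed.

Lemma L2 f g m s t : W f -> W g -> ncmul f g m != 0 -> sigma Q (ncmul f g) (s, t) ->
  exists k, sigma Q g (s, k) /\ sigma Q f (k, t).
Proof.
move=> Wf Wg Hm H.
have := H m Hm; case/ncmul_nz: Hm => i [h1 h2].
rewrite /sigma_m /= -(cat_take_drop i m) reach_cat; case=> k [a b].
exists k; split => m' hm'.
  by apply/(Wg _ _ h2 hm' (s, k)).
by apply/(Wf _ _ h1 hm' (k, t)).
Qed.

Lemma sigma0 (f : ncpoly R X) p : (forall m, f m = 0) -> sigma Q f p.
Proof. by move=> H m; rewrite H eqxx. Qed.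


Lemma Win f : in_RXQ Q f -> W f.
Proof. by case=> _ [_ H]. Qed.

Lemma chain a g b c f d (s t : qV Q) m0 m1 :
  W a -> W g -> W b -> W c -> W f -> W d ->
  sigma Q (ncmul (ncmul a g) b) (s, t) -> ncmul (ncmul a g) b m0 != 0 ->
  (forall p, sigma Q g p -> sigma Q (ncmul (ncmul c f) d) p) ->
  ncmul (ncmul a (ncmul (ncmul c f) d)) b m1 != 0 ->
  exists k3 k4, sigma Q (ncmul a c) (k4, t) /\ sigma Q (ncmul d b) (s, k3) /\
    sigma Q (ncmul (ncmul (ncmul a c) f) (ncmul d b)) (s, t).
Proof.
move=> Wa Wg Wb Wc Wf Wd H0 Hm0 Hgc Hm1.
have [k1 [Hb1 Hag]] := L2 (W_mul Wa Wg) Wb Hm0 H0.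
have [m2 Hm2] := ncmul_nzl Hm0.
have [k2 [Hg2 Ha2]] := L2 Wa Wg Hm2 Hag.
have Hcfd := Hgc _ Hg2.
have [m3 Hm3] := ncmul_nzl Hm1.
have [m4 Hm4] := ncmul_nzr Hm3.
have [k3 [Hd3 Hcf]] := L2 (W_mul Wc Wf) Wd Hm4 Hcfd.
have [m5 Hm5] := ncmul_nzl Hm4.
have [k4 [Hf4 Hc4]] := L2 Wc Wf Hm5 Hcf.
have Hac := L1 Hc4 Ha2.
have Hdb := L1 Hb1 Hd3.
exists k3, k4; do 2 split => //.
exact: L1 Hdb (L1 Hf4 Hac).
Qed.

Lemma filter_nz (T : Type) (L : seq T) (F : T -> ncpoly R X) :
  exists L', (forall x, List.In x L' -> List.In x L /\ exists m, F x m != 0) /\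
    forall m, \sum_(x <- L) F x m = \sum_(x <- L') F x m.
Proof.
elim: L => [|x L [L' [H1 H2]]]; first by exists [::]; split => // m.
case: (Classical_Prop.classic (exists m, F x m != 0)) => Hx.
  exists (x :: L'); split.
    move=> y /= [<-|hy]; first by split => //; left.
    by case: (H1 _ hy) => ? ?; split => //; right.
  by move=> m; rewrite !big_cons H2.
exists L'; split.
  by move=> y hy; case: (H1 _ hy) => ? ?; split => //; right.
move=> m; rewrite big_cons H2.
case: (eqVneq (F x m) 0) => [->|hn]; first by rewrite add0r.
by exfalso; apply: Hx; exists m.
Qed.


Lemma term_assoc a c f d b m : ncmul (ncmul (ncmul a c) f) (ncmul d b) m =
  ncmul (ncmul a (ncmul (ncmul c f) d)) b m.
Proof.
rewrite -ncmulA; apply: ncmul_ext => // w.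
transitivity (ncmul (ncmul a (ncmul c f)) d w); first by apply: ncmul_ext => // w'; exact: ncmulA.
exact: ncmulA.
Qed.

End S.

Theorem corollary4p4 (R : comPzRingType) (X : Type) (Q : quiver X)
  (F G : ncpoly R X -> Prop) :
  (forall f, F f -> in_RXQ Q f) ->
  (forall g, G g -> in_RXQ Q g) ->
  (forall g, G g -> Qconsequence Q F g) ->
  forall h, Qconsequence Q G h -> Qconsequence Q F h.
Proof.
move=> HF HG HGF h [hpoly [[p0 Hp0] [L [HL Hsum]]]].
pose term (tr : ncpoly R X * ncpoly R X * ncpoly R X) := ncmul (ncmul tr.1.1 tr.1.2) tr.2.
have [L1 [HL1 HS1]] := filter_nz L term.
suff [L' [H1 H2]] : exists L' : seq (ncpoly R X * ncpoly R X * ncpoly R X),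
    (forall tr, List.In tr L' ->
       in_RXQ Q tr.1.1 /\ F tr.1.2 /\ in_RXQ Q tr.2 /\
       (forall p, sigma Q h p -> sigma Q (ncmul (ncmul tr.1.1 tr.1.2) tr.2) p)) /\
    forall m, \sum_(tr <- L1) term tr m = \sum_(tr <- L') term tr m.
  split => //; split; first by exists p0.
  by exists L'; split => // m; rewrite Hsum HS1 H2.
clear HS1.
elim: L1 HL1 => [|tr L1 IH] HL1; first by exists [::].
have [L2 [H2a H2b]] := IH (fun x hx => HL1 x (or_intror hx)).
have [Htr [m0 Hm0]] := HL1 tr (or_introl erefl).
clear HL1 IH.
move: Htr Hm0; case: tr => [[a g] b] Htr Hm0.
case: (HL _ Htr) => /= [Ha [Gg [Hb Hsig]]].
case: (HGF g Gg) => _ [_ [Lg [HLg Hg]]].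
pose Lm := map (fun c : ncpoly R X * ncpoly R X * ncpoly R X =>
  (ncmul a c.1.1, c.1.2, ncmul c.2 b)) Lg.
have [L3 [H3a H3b]] := filter_nz Lm term.
exists (L3 ++ L2); split.
  move=> tr' hin0; case: (List.in_app_or _ _ _ hin0) => hin; last exact: H2a.
  case: (H3a _ hin) => hm [m1 hm1].
case: (proj1 (List.in_map_iff _ _ _) hm) => [[[c f] d] [Etr hc]]; subst tr'.
  case: (HLg _ hc) => /= [Hc [Ff [Hd Hcfd]]].
  have key : forall s t, sigma Q h (s, t) -> exists k3 k4,
      sigma Q (ncmul a c) (k4, t) /\ sigma Q (ncmul d b) (s, k3) /\
      sigma Q (ncmul (ncmul (ncmul a c) f) (ncmul d b)) (s, t).
    move=> s t H.
    apply: (chain (Win Ha) (Win (HG _ Gg)) (Win Hb) (Win Hc) (Win (HF _ Ff)) (Win Hd)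
      (Hsig _ H) Hm0 Hcfd (m1 := m1)).
    by rewrite -term_assoc.
  destruct p0 as [s0 t0].
  have [k3 [k4 [Hac [Hdb _]]]] := key _ _ Hp0.
  split; [|split; [exact: Ff|split]].
  - split; first exact: is_poly_mul (proj1 Ha) (proj1 Hc).
    split; first by exists (k4, t0).
    exact: W_mul (Win Ha) (Win Hc).
  - split; first exact: is_poly_mul (proj1 Hd) (proj1 Hb).
    split; first by exists (s0, k3).
    exact: W_mul (Win Hd) (Win Hb).
  - by case=> s t H; case: (key _ _ H) => k3' [k4' [_ [_ ?]]].
move=> m; rewrite big_cons big_cat /= H2b; congr (_ + _).
rewrite -H3b big_map /=.
rewrite /term /=.
under eq_bigr do rewrite term_assoc.
rewrite -(ncmul_suml Lg (fun x => ncmul a (ncmul (ncmul x.1.1 x.1.2) x.2)) b m).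
apply: ncmul_ext => // w.
rewrite -(ncmul_sumr Lg (fun x => ncmul (ncmul x.1.1 x.1.2) x.2) a w).
apply: ncmul_ext => // w'.

Qed.
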